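(* Let $(\Omega,\mathcal{F},\mathbb{P})$ be a probability space and $\mathcal{X}\subseteq\mathbb{L}^0$. Then either $\mathcal{X}$ fails to be uniformly $\mathbb{Q}$-integrable for every probability $\mathbb{Q}\ll\mathbb{P}$, or there exists a probability $\mathbb{Q}_{\mathcal{X}}\ll\mathbb{P}$ such that (i) $\mathcal{X}$ is uniformly $\mathbb{Q}_{\mathcal{X}}$-integrable, and (ii) whenever a probability $\mathbb{Q}\ll\mathbb{P}$ is singular to $\mathbb{Q}_{\mathcal{X}}$, $\mathcal{X}$ fails to be uniformly $\mathbb{Q}$-integrable.
   Context: $\mathbb{L}^0$ is the space of (equivalence classes modulo $\mathbb{P}$-null sets of) real-valued random variables. For a probability $\mathbb{Q}\ll\mathbb{P}$, $\mathcal{X}\subseteq\mathbb{L}^0$ is uniformly $\mathbb{Q}$-integrable if $\lim_{n\to\infty}\sup_{X\in\mathcal{X}}\mathbb{E}_{\mathbb{Q}}[|X|\mathbb{I}_{\{|X|>n\}}]=0$. *)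

(* Defs.v *)
From HB Require Import structures.
From mathcomp Require Import all_boot all_order all_algebra.
From mathcomp Require Import all_classical all_reals all_analysis.
Set Implicit Arguments. Unset Strict Implicit. Unset Printing Implicit Defensive.
Import Order.TTheory GRing.Theory Num.Theory.
Local Open Scope classical_set_scope.
Local Open Scope ring_scope.

Definition unif_integrable d (T : measurableType d) (R : realType)
  (Q : set T -> \bar R) (X : set (T -> R)) : Prop :=
  (fun n : nat =>
     ereal_sup [set (\int[Q]_(w in [set w | ((n%:R : R) < `|f w|)%R]) (`|f w|)%R%:E)%E
               | f in X]) @ \oo --> (0%:E : \bar R).

Definition mutually_singular d (T : measurableType d) (R : realType)
  (Q1 Q2 : set T -> \bar R) : Prop :=
  exists A : set T, [/\ measurable A, Q1 A = 0%E & Q2 (~` A) = 0%E].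

(* Main.v *)
Require Import Defs.
From HB Require Import structures.
From mathcomp Require Import all_boot all_order all_algebra.
From mathcomp Require Import all_classical all_reals all_analysis.
From mathcomp Require Import measurable_realfun lra.
Import Order.TTheory GRing.Theory Num.Theory.
Local Open Scope classical_set_scope.
Local Open Scope ring_scope.

Section Aux.
Context (d : measure_display) (T : measurableType d) (R : realType).
Variable (X : set (T -> R)).
Hypothesis hX : forall f, X f -> measurable_fun setT f.

Definition Dn (f : T -> R) (n : nat) := [set w | ((n%:R : R) < `|f w|)%R].

Definition Ist (mu : set T -> \bar R) (f : T -> R) (n : nat) : \bar R :=
  (\int[mu]_(w in Dn f n) (`|f w|)%R%:E)%E.

Definition Asup (mu : set T -> \bar R) (n : nat) :=
  ereal_sup [set Ist mu f n | f in X].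

Lemma UIE mu : unif_integrable mu X <-> (Asup mu @ \oo --> 0%E).
Proof. by []. Qed.

Lemma mabs f : X f -> measurable_fun setT (fun w => (`|f w|)%:E : \bar R).
Proof.
move=> Xf; apply/measurable_EFinP; apply: measurableT_comp => //; exact: hX.
Qed.

Lemma mDn f n : X f -> measurable (Dn f n).
Proof.
move=> Xf.
have mf : measurable_fun setT (fun w => `|f w|) by apply: measurableT_comp => //; exact: hX.
have := mf measurableT `]n%:R, +oo[%classic (measurable_itv _).
rewrite setTI; congr measurable; apply/seteqP; split => w /=;
  by rewrite in_itv /= andbT.
Qed.

Local Open Scope ereal_scope.

Lemma Ist_ge0 (mu : {measure set T -> \bar R}) f n : 0 <= Ist mu f n.
Proof. by apply: integral_ge0 => w _; rewrite lee_fin. Qed.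

Lemma Ist_le_Asup mu f n : X f -> Ist mu f n <= Asup mu n.
Proof. by move=> Xf; apply: ereal_sup_ubound; exists f. Qed.

Lemma Asup_ge0 (mu : {measure set T -> \bar R}) f n : X f -> 0 <= Asup mu n.
Proof. by move=> Xf; apply: (le_trans (Ist_ge0 mu f n)); exact: Ist_le_Asup. Qed.

Lemma UI_nonempty mu : unif_integrable mu X -> exists f, X f.
Proof.
move=> /UIE h; apply: contrapT => hne.
have e : Asup mu = fun=> -oo.
  apply/funext => n; rewrite /Asup.
  have -> : [set Ist mu f n | f in X] = set0.
    by apply/seteqP; split => // x [f Xf _]; apply: hne; exists f.
  exact: ereal_sup0.
move: h; rewrite e => /(cvg_lim (@ereal_hausdorff R)); rewrite lim_cst //.
Qed.

Lemma UI_bound (Q : probability T R) : unif_integrable Q X ->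
  exists M : R, (0 <= M)%R /\ forall n f, X f -> Ist Q f n <= M%:E.
Proof.
move=> /UIE /fine_cvgP [hfin hcv].
have hlt : \forall t \near \oo, (fine (Asup Q t) < 1)%R by apply: (cvgr_lt _ hcv).
have [N _ hN] := filterI hfin hlt.
have [hN1 hN2] := hN N (leqnn N).
exists (N%:R + 1)%R; split; first by rewrite addr_ge0.
move=> n f Xf.
have hI : Ist Q f N <= 1%:E.
  apply: (le_trans (Ist_le_Asup _ _ _ Xf)).
  by rewrite -(fineK hN1) lee_fin ltW.
apply: (@le_trans _ _ (\int[Q]_(w in Dn f N `|` ~` Dn f N) (`|f w|)%:E)).
  apply: ge0_subset_integral => //.
  - exact: mDn.
  - by apply: measurableU; [exact: mDn|apply: measurableC; exact: mDn].
  - by rewrite setUCr; exact: mabs.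
  - by move=> w _; rewrite setUCr.
rewrite ge0_integral_setU //; first last.
- exact/disj_setPCl.
- by rewrite setUCr; exact: mabs.
- by apply: measurableC; exact: mDn.
- exact: mDn.
rewrite EFinD addeC; apply: leeD => //.
apply: (@le_trans _ _ (\int[Q]_(w in ~` Dn f N) (cst (N%:R%:E) w))).
  apply: ge0_le_integral => //.
  - by apply: measurableC; exact: mDn.
  - by apply: (measurable_funS measurableT) => //; exact: mabs.
  - by move=> w; rewrite /Dn /= => /negP; rewrite -leNgt lee_fin.
rewrite integral_cst; last by apply: measurableC; exact: mDn.
rewrite -[leRHS]mule1; apply: lee_wpmul2l; first by rewrite lee_fin.
by apply: probability_le1; apply: measurableC; exact: mDn.
Qed.

Lemma geo_sum : \sum_(k <oo) ((2 ^ (k + 1))%:R^-1 : R)%:E = 1.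
Proof.
have := @cvg_geometric_eseries_half R 1%R 0.
move/(cvg_lim (@ereal_hausdorff R)); rewrite expr0 divr1 => <-.
by apply: congr_lim; apply/funext => n; apply: eq_bigr => k _; rewrite div1r.
Qed.

Lemma term_le_series (u : (\bar R)^nat) k : (forall i, 0 <= u i) ->
  u k <= \sum_(i <oo) u i.
Proof.
move=> u0; apply: le_trans (nneseries_lim_ge k.+1 _); last by move=> *; exact: u0.
rewrite big_nat_recr //= addeC; apply: leeDl.
by apply: sume_ge0 => i _; exact: u0.
Qed.

Lemma abs_contP (Q P : {measure set T -> \bar R}) B : Q `<< P ->
  measurable B -> P B = 0 -> Q B = 0.
Proof.
move=> QP mB PB; apply: (QP B) => // A mA AB.
by apply/eqP; rewrite eq_le measure_ge0 andbT -PB le_measure // inE.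
Qed.

Lemma mixture (P : probability T R) (Q_ : nat -> probability T R) :
  (forall k, Q_ k `<< P /\ unif_integrable (Q_ k) X) -> (exists f, X f) ->
  exists QX : probability T R, [/\ QX `<< P, unif_integrable QX X &
     forall k B, measurable B -> QX B = 0 -> Q_ k B = 0].
Proof.
move=> hQ [f0 Xf0].
have [M hM] := choice (fun k => UI_bound (Q_ k) (hQ k).2).
have M0 k : (0 <= M k)%R := (hM k).1.
have h1M k : (0 < 1 + M k)%R by have := M0 k; lra.
pose c k := ((2 ^ (k + 1))%:R^-1 / (1 + M k))%R.
have c_gt0 k : (0 < c k)%R.
  by rewrite /c divr_gt0 // invr_gt0 ltr0n expn_gt0.
have c_le k : (c k <= (2 ^ (k + 1))%:R^-1)%R.
  rewrite /c -[X in (_ <= X)%R]mulr1 ler_wpM2l ?invr_ge0 ?ler0n //.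
  by rewrite invf_le1 //; have := M0 k; lra.
pose S := \sum_(k <oo) (c k)%:E.
have S_ge : (c 0%N)%:E <= S.
  by apply: (term_le_series (fun k => (c k)%:E) 0%N) => i; rewrite lee_fin ltW.
have S_le : S <= 1.
  rewrite -geo_sum; apply: lee_nneseries => [i _ _|i _]; rewrite lee_fin //.
  exact: ltW.
have Sfin : S \is a fin_num.
  rewrite ge0_fin_numE; last by apply: le_trans S_ge; rewrite lee_fin ltW.
  by apply: le_lt_trans S_le _; exact: ltry.
pose s := fine S.
have Ss : S = s%:E by rewrite /s fineK.
have s_gt0 : (0 < s)%R.
  by rewrite -lte_fin -Ss; apply: lt_le_trans S_ge; rewrite lte_fin.
pose w k : {nonneg R} := NngNum (ltW (divr_gt0 (c_gt0 k) s_gt0)).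
pose m_ : (measure T R)^nat := fun k => mscale (w k) (Q_ k).
pose mu := mseries m_ 0.
have mu1 : mu setT = 1.
  rewrite /mu /mseries.
  transitivity (\sum_(k <oo) (s^-1)%:E * (c k)%:E).
    apply: eq_eseriesr => k _; rewrite /= /mscale.
    transitivity ((w k)%:num%:E * 1); first by congr (_ * _); exact: probability_setT.
    by rewrite mule1 -EFinM mulrC.
  rewrite (@nneseriesZl R (fun k => (c k)%:E) xpredT); last by move=> i _; rewrite lee_fin ltW.
  by rewrite -/S Ss -EFinM mulVf // gt_eqF.
pose QX := mnormalize mu P.
have QXE : (QX : set T -> \bar R) = mu.
  have mu1' A : A = setT -> mseries m_ 0 A = 1 by move=> ->; exact: mu1.
  apply/funext => U; rewrite /QX /mnormalize /=.
  case: ifPn => [/orP[]|_] /=.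
  - by rewrite mu1' // onee_eq0.
  - by rewrite mu1' //.
  - by rewrite [X in fine X]mu1' // invr1 mule1.
exists QX; split.
- move=> N hN A mA AN; transitivity (mu A); first by rewrite -QXE.
  rewrite /mu /mseries /=; apply: (@eseries0 R (fun k => m_ k A) 0%N xpredT) => k _ _.
  by rewrite /= /mscale (abs_contP _ _ _ (hQ k).1 mA) ?mule0 //; apply: hN.
- suff: unif_integrable mu X by rewrite -QXE.
  apply/UIE.
  have IstE n f : X f -> Ist mu f n = \sum_(k <oo) (w k)%:num%:E * Ist (Q_ k) f n.
    move=> Xf; rewrite /Ist /mu ge0_integral_measure_series //.
    - apply: eq_eseriesr => k _; rewrite ge0_integral_mscale //.
      + exact: mDn.
      + by apply: (measurable_funS measurableT) => //; exact: mabs.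
    - exact: mDn.
    - by apply: (measurable_funS measurableT) => //; exact: mabs.
  pose b n := \sum_(k <oo) (w k)%:num%:E * Asup (Q_ k) n.
  apply: (@squeeze_cvge _ _ _ _ (cst 0) _ b).
  + apply: nearW => n; apply/andP; split; first exact: (Asup_ge0 _ _ _ Xf0).
    apply: ge_ereal_sup => _ [f Xf <-]; rewrite IstE //.
    apply: lee_nneseries => [k _ _|k _].
      by apply: mule_ge0; [rewrite lee_fin|exact: Ist_ge0].
    by apply: lee_wpmul2l; [rewrite lee_fin|exact: Ist_le_Asup].
  + exact: cvg_cst.
  + have Aq0 k n : 0 <= Asup (Q_ k) n by exact: (Asup_ge0 _ _ _ Xf0).
    have bE : b = fun n => \int[counting]_k ((w k)%:num%:E * Asup (Q_ k) n).
      apply/funext => n; rewrite ge0_integral_count // => k.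
      by apply: mule_ge0; [rewrite lee_fin|exact: Aq0].
    rewrite bE.
    pose g k := ((2 ^ (k + 1))%:R^-1 / s)%:E.
    have := @dominated_cvg _ _ _ counting setT measurableT
      (fun n k => (w k)%:num%:E * Asup (Q_ k) n) (cst 0) g.
    rewrite integral0; apply.
    * by [].
    * move=> k _; have := cvgeZl (y := (w k)%:num%:E) _ ((UIE _).1 (hQ k).2).
      by rewrite mule0; apply.
    * by [].
    * apply/integrableP; split; first by [].
      have ga k : `|g k| = (s^-1)%:E * ((2 ^ (k + 1))%:R^-1)%:E.
        rewrite /g gee0_abs; last by rewrite lee_fin divr_ge0 // ltW.
        transitivity ((s^-1 * (2 ^ (k + 1))%:R^-1)%:E); first by rewrite mulrC.
        exact: EFinM.
      apply: (@le_lt_trans _ _ (\sum_(k <oo) `|g k|)).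
        rewrite le_eqVlt; apply/orP; left; apply/eqP.
        by apply: ge0_integral_count => k; exact: abse_ge0.
      rewrite (eq_eseriesr (fun k _ => ga k)).
      rewrite (@nneseriesZl R (fun k => ((2 ^ (k + 1))%:R^-1)%:E) xpredT); last first.
        by move=> i _; rewrite lee_fin.
      by rewrite geo_sum mule1 ltry.
    * move=> n k _; rewrite gee0_abs; last by apply: mule_ge0; [rewrite lee_fin|exact: Aq0].
      have AM : Asup (Q_ k) n <= (M k)%:E.
        by apply: ge_ereal_sup => _ [f Xf <-]; exact: (hM k).2.
      apply: le_trans (lee_wpmul2l _ AM) _; first by rewrite lee_fin.
      rewrite /g -EFinM lee_fin /=.
      have e : (c k * (1 + M k) = (2 ^ (k + 1))%:R^-1)%R.
        by rewrite /c -mulrA mulVf ?mulr1 // gt_eqF.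
      rewrite -e mulrAC.
      apply: ler_wpM2r; first by rewrite invr_ge0 ltW.
      apply: ler_wpM2l; first exact: ltW.
      by have := M0 k; lra.
- move=> k B mB hB; have h0 : mu B = 0 by rewrite -QXE.
  have := term_le_series (fun i => m_ i B) k (fun i => measure_ge0 _ _).
  rewrite -[X in _ <= X]/(mu B) h0 /= => hle.
  apply/eqP; rewrite eq_le measure_ge0 andbT.
  have wk : (0 < (w k)%:num)%R by rewrite /= divr_gt0.
  by rewrite -(@lee_pmul2l _ ((w k)%:num)%:E) ?lte_fin // mule0.
Qed.

Lemma min_carrier (P Q : probability T R) : exists B, [/\ measurable B, Q (~` B) = 0 &
  forall B', measurable B' -> Q (~` B') = 0 -> P B <= P B'].
Proof.
pose V := [set P B | B in [set B | measurable B /\ Q (~` B) = 0]].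
pose m := ereal_inf V.
have m0 : 0 <= m by apply: le_ereal_inf_tmp => _ [B _ <-]; exact: measure_ge0.
have m1 : m <= 1.
  apply: le_trans (probability_le1 P measurableT).
  apply: ereal_inf_lbound; exists setT => //; split => //.
  by rewrite setCT measure0.
have mfin : m \is a fin_num.
  by rewrite ge0_fin_numE //; apply: le_lt_trans m1 _; exact: ltry.
have hk k : exists B, (measurable B /\ Q (~` B) = 0) /\ P B < m + (k.+1%:R^-1)%:E.
  have : m < m + (k.+1%:R^-1)%:E by rewrite lteDl // lte_fin invr_gt0.
  by move/ereal_inf_lt => [_ [B hB <-] lt]; exists B.
have [Bk hBk] := choice hk.
exists (\bigcap_k Bk k); split.
- by apply: bigcapT_measurable => k; exact: (hBk k).1.1.
- rewrite setC_bigcap; apply/eqP; rewrite eq_le measure_ge0 andbT.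
  apply: le_trans (measure_sigma_subadditive _ _ _ _) _.
  + by move=> k; apply: measurableC; exact: (hBk k).1.1.
  + by apply: bigcupT_measurable => k; apply: measurableC; exact: (hBk k).1.1.
  + by [].
  + by rewrite (@eseries0 R _ 0%N xpredT) // => k _ _; exact: (hBk k).1.2.
- move=> B' mB' QB'.
  have mleB : m <= P B' by apply: ereal_inf_lbound; exists B'.
  apply: (le_trans _ mleB); apply/lee_addgt0Pr => e e0.
  have [k _ hk'] := near_infty_natSinv_lt (PosNum e0).
  have hke := hk' k (leqnn k).
  apply: (@le_trans _ _ (P (Bk k))).
  - apply: le_measure; rewrite ?inE.
    + by apply: bigcapT_measurable => j; exact: (hBk j).1.1.
    + exact: (hBk k).1.1.
    + by move=> x; apply.
  - apply: le_trans (ltW (hBk k).2) _.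
    by apply: leeD => //; rewrite lee_fin ltW.
Qed.

Lemma main_aux (P : probability T R) :
  (forall Q : probability T R, Q `<< P -> ~ unif_integrable Q X) \/
  (exists QX : probability T R,
     [/\ QX `<< P, unif_integrable QX X &
         forall Q : probability T R, Q `<< P ->
           mutually_singular Q QX -> ~ unif_integrable Q X]).
Proof.
case: (pselect (exists Q : probability T R, Q `<< P /\ unif_integrable Q X))
  => [[Q0 [Q0P Q0U]]|hno]; last first.
  by left => Q QP QU; apply: hno; exists Q.
right.
have Xne := UI_nonempty _ Q0U.
pose good (Q : probability T R) := Q `<< P /\ unif_integrable Q X.
pose mc (Q : probability T R) B := [/\ measurable B, Q (~` B) = 0 &
  forall B', measurable B' -> Q (~` B') = 0 -> P B <= P B'].
pose V := [set P B | B in [set B | exists Q, good Q /\ mc Q B]].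
pose ss := ereal_sup V.
have ss1 : ss <= 1.
  apply: ge_ereal_sup => _ [B [Q [_ [mB _ _]]] <-].
  exact: probability_le1.
have ss0 : 0 <= ss.
  have [B0 hB0] := min_carrier P Q0.
  apply: le_trans (ereal_sup_ubound _); last by exists B0 => //; exists Q0.
  exact: measure_ge0.
have ssfin : ss \is a fin_num.
  by rewrite ge0_fin_numE //; apply: le_lt_trans ss1 _; exact: ltry.
have hk k : exists Q, good Q /\ exists B, mc Q B /\ ss - (k.+1%:R^-1)%:E < P B.
  have : ss - (k.+1%:R^-1)%:E < ss.
    by rewrite lteBlDr // lteDl // lte_fin invr_gt0.
  by move/ereal_sup_gt => [_ [B [Q [gQ mQ]] <-] lt]; exists Q; split => //; exists B.
have [Qk hQk] := choice hk.
have [QX [QXP QXU QXk]] := mixture P Qk (fun k => (hQk k).1) Xne.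
exists QX; split => //.
have [BX [mBX QXBX minBX]] := min_carrier P QX.
have ssX : ss <= P BX.
  apply/lee_addgt0Pr => e e0.
  have [k _ hk'] := near_infty_natSinv_lt (PosNum e0).
  have hke := hk' k (leqnn k).
  have [_ [Bk [[mBk QkBk minBk] ltk]]] := hQk k.
  have : P Bk <= P BX.
    apply: minBk; first exact: mBX.
    by apply: QXk => //; exact: measurableC.
  move=> le1; move: ltk; rewrite lteBlDr // => lt2.
  apply: ltW; apply: lt_le_trans lt2 _; apply: leeD => //.
  by rewrite lee_fin ltW.
move=> Q QP [A [mA QA QXA]] QU.
have [BQ [mBQ QBQ minBQ]] := min_carrier P Q.
have PBQ : 0 < P BQ.
  rewrite lt0e measure_ge0 andbT; apply/negP => /eqP PBQ0.
  have QBQ0 : Q BQ = 0 by exact: (abs_contP _ _ _ QP mBQ).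
  have e1 : Q (BQ `|` ~` BQ) = Q BQ + Q (~` BQ).
    by apply: measureU => //; [exact: measurableC|exact: setICr].
  have e2 : Q BQ + Q (~` BQ) = 0 by rewrite QBQ0 QBQ adde0.
  have e3 : Q (BQ `|` ~` BQ) = 1 by rewrite setUCr; exact: probability_setT.
  by move: e3; rewrite e1 e2 => /eqP; rewrite eq_sym onee_eq0.
pose Q2 k := if k == 0%N then Q else QX.
have hQ2 k : Q2 k `<< P /\ unif_integrable (Q2 k) X.
  by rewrite /Q2; case: ifP.
have [Q' [Q'P Q'U Q'k]] := mixture P Q2 hQ2 Xne.
have [B' [mB' Q'B' minB']] := min_carrier P Q'.
have QB' : Q (~` B') = 0 := Q'k 0%N _ (measurableC mB') Q'B'.
have QXB' : QX (~` B') = 0 := Q'k 1%N _ (measurableC mB') Q'B'.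
have h1 : P BX <= P (B' `&` A).
  apply: minBX; first exact: measurableI.
  rewrite setCI; apply: null_set_setU => //; exact: measurableC.
have h2 : P BQ <= P (B' `\` A).
  apply: minBQ; first exact: measurableD.
  rewrite setCD; apply: null_set_setU => //; exact: measurableC.
have hB'le : P B' <= ss.
  by apply: ereal_sup_ubound; exists B' => //; exists Q'.
have h3 : P B' = P (B' `\` A) + P (B' `&` A) by exact: measureDI.
have : ss < P B'.
  rewrite h3; apply: (@lt_le_trans _ _ (P BQ + ss)).
    by rewrite addeC lteDl.
  by rewrite leeD // (le_trans ssX h1).
by rewrite ltNge hB'le.
Qed.

End Aux.

Theorem proposition2p4 (d : measure_display) (Omega : measurableType d)
  (R : realType) (P : probability Omega R) (X : set (Omega -> R))
  (hX : forall f, X f -> measurable_fun setT f) :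
  (forall Q : probability Omega R, Q `<< P -> ~ unif_integrable Q X) \/
  (exists QX : probability Omega R,
     [/\ QX `<< P, unif_integrable QX X &
         forall Q : probability Omega R, Q `<< P ->
           mutually_singular Q QX -> ~ unif_integrable Q X]).
Proof. exact: main_aux. Qed.
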